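(* Let $\mathbb{S}=(S,\Sigma,\{\tau_a\mid a\in L\})$ be an LMP, let $\Sigma_0\subseteq\Sigma$ be a sub-$\sigma$-algebra with $\mathcal{R}(\Sigma_0)=\mathcal{R}^T(\Sigma_0)$, and put $R_0=\mathcal{R}(\Sigma_0)$. Then for every limit ordinal $\lambda$, $\Sigma_\lambda$ is a stable $\sigma$-algebra.
   Context: An LMP is a triple $(S,\Sigma,\{\tau_a\mid a\in L\})$ with $(S,\Sigma)$ a measurable space, $L$ countable, and each $\tau_a:S\times\Sigma\to[0,1]$ a Markov kernel (subprobability measure in the second argument, measurable in the first). For $R\subseteq S\times S$, $A$ is $R$-closed if $x\in A$, $xRs$ imply $s\in A$; $\Sigma(R)$ is the family of $R$-closed members of $\Sigma$. For $\Gamma\subseteq\mathcal{P}(S)$, $\mathcal{R}(\Gamma)=\{(s,t):\forall A\in\Gamma\,(s\in A\iff t\in A)\}$; for $\Lambda\subseteq\Sigma$, $\mathcal{R}^T(\Lambda)=\{(s,t):\forall a\in L\,\forall E\in\Lambda\ \tau_a(s,E)=\tau_a(t,E)\}$. $\mathcal{O}(R)=\mathcal{R}^T(\Sigma(R))$, $\mathcal{G}(\Lambda)=\Sigma(\mathcal{R}^T(\Lambda))$. Iterates: $R_{\alpha+1}=\mathcal{O}(R_\alpha)$, $R_\lambda=\bigcap_{\alpha<\lambda}R_\alpha$ for limit $\lambda$; $\Sigma_{\alpha+1}=\mathcal{G}(\Sigma_\alpha)$, $\Sigma_\lambda=\sigma(\bigcup_{\alpha<\lambda}\Sigma_\alpha)$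 for limit $\lambda$. A family $\Lambda\subseteq\Sigma$ is stable if for all $A\in\Lambda$, rational $r\in[0,1]$ and $a\in L$, $\{s:\tau_a(s,A)>r\}\in\Lambda$. *)

(* Defs.v *)
From HB Require Import structures.
From mathcomp Require Import all_boot all_order all_algebra.
From mathcomp Require Import all_classical all_reals all_analysis.
Set Implicit Arguments. Unset Strict Implicit. Unset Printing Implicit Defensive.
Import Order.TTheory GRing.Theory Num.Theory.
Local Open Scope classical_set_scope.
Local Open Scope ring_scope.

(* An LMP on the measurable space S (sigma-algebra = [measurable]) with a
   countable label set L: a family of subprobability (Markov) kernels. *)
Definition LMP (d : measure_display) (S : measurableType d) (R : realType)
  (L : countType) := L -> R.-spker S ~> S.

Section LMPdefs.
Context (d : measure_display) (S : measurableType d) (R : realType)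
  (L : countType) (tau : LMP S R L).

Definition rel_closed (Rel : S -> S -> Prop) (A : set S) : Prop :=
  forall x s, A x -> Rel x s -> A s.

Definition SigmaR (Rel : S -> S -> Prop) : set (set S) :=
  [set A | measurable A /\ rel_closed Rel A].

Definition RelOf (Gamma : set (set S)) : S -> S -> Prop :=
  fun s t => forall A, Gamma A -> (A s <-> A t).

Definition RelT (Lambda : set (set S)) : S -> S -> Prop :=
  fun s t => forall a E, Lambda E -> tau a s E = tau a t E.

Definition Oop (Rel : S -> S -> Prop) : S -> S -> Prop := RelT (SigmaR Rel).
Definition Gop (Lambda : set (set S)) : set (set S) := SigmaR (RelT Lambda).

Definition stable (Lambda : set (set S)) : Prop :=
  Lambda `<=` measurable /\
  forall (A : set S) (r : rat) (a : L), Lambda A -> 0 <= r <= 1 ->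
    Lambda [set s | ((ratr r)%:E < tau a s A)%E].

End LMPdefs.

(* Ordinal-indexed iterates.  The ordinals are represented by an arbitrary
   well-ordered index type (I, lt) with least element i0 (playing 0). *)
Definition strict_well_order (I : Type) (lt : I -> I -> Prop) : Prop :=
  (forall i, ~ lt i i) /\ (forall i j k, lt i j -> lt j k -> lt i k) /\
  (forall i j, lt i j \/ i = j \/ lt j i) /\ well_founded lt.

Definition is_succ (I : Type) (lt : I -> I -> Prop) (i j : I) : Prop :=
  lt i j /\ ~ (exists k, lt i k /\ lt k j).

Definition is_limit (I : Type) (lt : I -> I -> Prop) (l : I) : Prop :=
  (exists k, lt k l) /\ ~ (exists i, is_succ lt i l).

Definition sigma_iterates (d : measure_display) (S : measurableType d)
  (R : realType) (L : countType) (tau : LMP S R L)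
  (Sigma0 : set (set S)) (I : Type) (lt : I -> I -> Prop) (i0 : I)
  (F : I -> set (set S)) : Prop :=
  F i0 = Sigma0 /\
  (forall i j, is_succ lt i j -> F j = Gop tau (F i)) /\
  (forall l, is_limit lt l ->
     F l = <<s [set A | exists k, lt k l /\ F k A] >>).

(* Main.v *)
Require Import Defs.
From HB Require Import structures.
From mathcomp Require Import all_boot all_order all_algebra.
From mathcomp Require Import all_classical all_reals all_analysis.
From mathcomp Require Import measurable_realfun.
Local Open Scope classical_set_scope.

Set Implicit Arguments. Unset Strict Implicit. Unset Printing Implicit Defensive.
Import Order.TTheory GRing.Theory Num.Theory.

Section helpers.
Context (d : measure_display) (S : measurableType d) (R : realType)
  (L : countType) (tau : LMP S R L).

Lemma RelT_sym Lam s t : RelT tau Lam s t -> RelT tau Lam t s.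
Proof. by move=> h a E HE; rewrite h. Qed.

Lemma Gop_sigma Lam : sigma_algebra setT (Gop tau Lam).
Proof.
split.
- by split => // x s [].
- move=> A [mA cA]; split; first by rewrite setTD; exact: measurableC.
  move=> x s [_ nAx] xs; split => // As; apply: nAx.
  exact: (cA s x As (RelT_sym xs)).
- move=> A hA; split; first by apply: bigcup_measurable => n _; case: (hA n).
  move=> x s [n _ Ax] xs; exists n => //; exact: (proj2 (hA n) x s Ax xs).
Qed.

Lemma Gop_mono Lam Lam' : Lam `<=` Lam' -> Gop tau Lam `<=` Gop tau Lam'.
Proof.
move=> h A [mA cA]; split => // x s Ax xs; apply: (cA x s Ax).
by move=> a E HE; apply: xs; exact: h.
Qed.

Lemma Gop_meas Lam : Gop tau Lam `<=` measurable.
Proof. by move=> A []. Qed.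

End helpers.

Lemma wf_min (I : Type) (lt : I -> I -> Prop) (P : I -> Prop) :
  well_founded lt -> (exists x, P x) -> exists m, P m /\ forall n, P n -> ~ lt n m.
Proof.
move=> wf [x Px]; apply: contrapT => hn; move: Px; elim/(well_founded_ind wf): x.
move=> x IH Px; apply: hn; exists x; split => // n Pn ltnx.
exact: (IH n ltnx Pn).
Qed.

Lemma sigma_setI (T : pointedType) (G : set (set T)) :
  sigma_algebra setT G -> setI_closed G.
Proof.
move=> sG A B GA GB; rewrite -(sigma_algebra_id sG).
apply: (@measurableI _ (g_sigma_algebraType G) A B).
- by rewrite /measurable /= (sigma_algebra_id sG).
- by rewrite /measurable /= (sigma_algebra_id sG).
Qed.

Theorem theorem3p15 (d : measure_display) (S : measurableType d)
  (R : realType) (L : countType) (tau : LMP S R L)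
  (Sigma0 : set (set S))
  (hsig : sigma_algebra setT Sigma0) (hsub : Sigma0 `<=` measurable)
  (hR : RelOf Sigma0 = RelT tau Sigma0)
  (I : Type) (lt : I -> I -> Prop) (i0 : I)
  (hwo : strict_well_order lt) (hi0 : forall i, ~ lt i i0)
  (F : I -> set (set S)) (hF : sigma_iterates tau Sigma0 lt i0 F) :
  forall l, is_limit lt l -> sigma_algebra setT (F l) /\ stable tau (F l).
Proof.
have [irr [trans [tri wf]]] := hwo.
have [F0 [Fs Fl]] := hF.
have cases j : j = i0 \/ (exists i, is_succ lt i j) \/ is_limit lt j.
  have [->|ji0] := pselect (j = i0); first by left.
  right; have [h|nh] := pselect (exists i, is_succ lt i j); first by left.
  right; split => //; exists i0.
  by case: (tri i0 j) => [//|[e|h]]; [rewrite e in ji0|exfalso; exact: (hi0 j)].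
pose P j := [/\ (forall i, lt i j -> F i `<=` F j), F j `<=` Gop tau (F j),
  F j `<=` measurable & sigma_algebra setT (F j)].
have HP : forall j, P j.
  move=> j; elim/(well_founded_ind wf): j => j IH.
  case: (cases j) => [->|[[i [lij nk]]|lj]].
  - split; first by move=> i /hi0.
    + rewrite F0 => A HA; split; first exact: hsub.
      by move=> x s Ax; rewrite -hR => /(_ A HA) h; apply/h.
    + by rewrite F0.
    + by rewrite F0.
  - have [IH1 IH2 IH3 IH4] := IH i lij.
    have FjE := Fs _ _ (conj lij nk).
    have sub : forall k, lt k j -> F k `<=` F j.
      move=> k lkj; case: (tri k i) => [lki|[->|lik]].
      + by apply: subset_trans (IH1 k lki) _; rewrite FjE.
      + by rewrite FjE.
      + by exfalso; apply: nk; exists k.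
    split => //.
    + rewrite FjE; apply: Gop_mono; rewrite -FjE; exact: sub.
    + by rewrite FjE; exact: Gop_meas.
    + by rewrite FjE; exact: Gop_sigma.
  - have FjE := Fl _ lj.
    have sub : forall k, lt k j -> F k `<=` F j.
      by move=> k lkj A HA; rewrite FjE; apply: sub_gen_smallest; exists k.
    split => //.
    + rewrite {1}FjE; apply: smallest_sub; first exact: Gop_sigma.
      move=> A [k [lkj HA]]; have [_ IH2 _ _] := IH k lkj.
      exact: (Gop_mono (sub k lkj) (IH2 A HA)).
    + rewrite FjE; apply: smallest_sub; first exact: sigma_algebra_measurable.
      by move=> A [k [lkj HA]]; have [_ _ IH3 _] := IH k lkj; exact: IH3.
    + rewrite FjE; exact: smallest_sigma_algebra.
move=> l hl.
have FlE := Fl l hl.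
set U := [set A | exists k, lt k l /\ F k A] in FlE.
have succ k : lt k l -> exists m, is_succ lt k m /\ lt m l.
  move=> lkl.
  have [m [lkm minm]] := wf_min (P := fun m => lt k m) wf (ex_intro _ l lkl).
  have sm : is_succ lt k m.
    by split => // -[n [lkn lnm]]; exact: (minm n lkn lnm).
  exists m; split => //.
  case: (tri m l) => [//|[e|llm]].
  - by exfalso; apply: (proj2 hl); exists k; rewrite -e.
  - by exfalso; exact: (minm l lkl llm).
have UI : setI_closed U.
  move=> A B [k1 [l1 A1]] [k2 [l2 B2]].
  case: (tri k1 k2) => [h|[e|h]].
  - exists k2; split => //; apply: sigma_setI; first by case: (HP k2).
      by case: (HP k2) => + _ _ _; move/(_ k1 h A A1).
    exact: B2.
  - exists k2; split => //; apply: sigma_setI; first by case: (HP k2).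
      by rewrite -e. exact: B2.
  - exists k1; split => //; apply: sigma_setI; first by case: (HP k1).
      exact: A1.
    by case: (HP k1) => + _ _ _; move/(_ k2 h B B2).
split; first by case: (HP l).
split; first by case: (HP l).
move=> A r a HA _.
pose T' := g_sigma_algebraType U.
pose H := [set B : set S | measurable B /\
   measurable_fun (setT : set T') (fun s : T' => tau a s B)].
have UH : U `<=` H.
  move=> B [k [lkl HB]].
  have mB : measurable B by case: (HP k) => _ _ + _; apply.
  split => // _ Y mY; rewrite setTI.
  have [m [skm lml]] := succ k lkl.
  apply: sub_gen_smallest; exists m; split => //; rewrite (Fs k m skm); split.
    by have := measurable_kernel (tau a) B mB measurableT Y mY; rewrite setTI.
  by move=> x s hx xs; rewrite /preimage /= -(xs a B HB).
have lH : lambda_system setT H.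
  have UT : U setT.
    exists i0; split; first by case: (tri i0 l) => [//|[e|h]];
      [rewrite -e in hl; have [[k hk] _] := hl; exfalso; exact: (hi0 k)|
       exfalso; exact: (hi0 l)].
    rewrite F0; have [h0 hC _] := hsig; by rewrite -setC0 -setTD; apply: hC.
  have [_ mfT] := UH _ UT.
  apply/dynkin_lambda_system; split.
  - exact: UH.
  - move=> B [mB mfB]; split; first exact: measurableC.
    have e : (fun s : T' => tau a s (~` B)) =
             (fun s : T' => (tau a s setT - tau a s B)%E).
      apply/funext => s; rewrite -setTD measureD // ?setTI //.
      exact: (le_lt_trans (sprob_kernel_le1 _ _) (ltry 1)).
    rewrite e; exact: emeasurable_funB.
  - move=> G tG hG; split.
      by apply: bigcup_measurable => k _; exact: (hG k).1.
    apply: (emeasurable_fun_cvg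
      (fun n (s : T') => (\sum_(0 <= i < n) tau a s (G i))%E)).
    + by move=> m; apply: emeasurable_sum => i; exact: (hG i).2.
    + by move=> s _; apply: measure_sigma_additive => // i; exact: (hG i).1.
have sub := lambda_system_subset UI lH UH (fun _ _ => subsetT _).
have [_ mf] : H A by apply: sub; rewrite -FlE.
rewrite FlE.
have := emeasurable_fun_o_infty (measurableT) mf ((ratr r)%:E).
by rewrite setTI.
Qed.
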